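(* Let $R$ be a commutative Noetherian ring, $M$ a finitely generated $R$-module, $X \subseteq \mathrm{Spec}(R)$ a basic set, and $\mathscr{E}$ an $R$-submodule of $\mathrm{Hom}_R(M,R)$. Let $S = \{x_1,\ldots,x_n\} \subseteq M$ be an $X$-free-basic set for $M$ with respect to $\mathscr{E}$, and let $(a,x_1) \in R \oplus M$ be an $X$-free-basic element for $R \oplus M$ with respect to $R \oplus \mathscr{E}$. Then there exist $a_1,\ldots,a_{n-1} \in R$ such that $S' = \{x_1',\ldots,x_{n-1}'\} = \{x_1 + a a_1 x_n, x_2 + a_2 x_n, \ldots, x_{n-1} + a_{n-1} x_n\}$ is an $X$-free-basic set for $M$ with respect to $\mathscr{E}$, and $(a,x_1')$ is an $X$-free-basic element for $R \oplus M$ with respect to $R \oplus \mathscr{E}$.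
   Context: A subset $X \subseteq \mathrm{Spec}(R)$ is basic if, whenever the intersection of a family of primes in $X$ is a prime ideal, that intersection belongs to $X$. For $\mathfrak{p} \in X$, $\dim_X(\mathfrak{p})$ is the supremum of lengths $n$ of chains $\mathfrak{p} = \mathfrak{p}_0 \subsetneq \cdots \subsetneq \mathfrak{p}_n$ in $X$. $\mathscr{E}_\mathfrak{p}$ is viewed inside $\mathrm{Hom}_{R_\mathfrak{p}}(M_\mathfrak{p},R_\mathfrak{p})$. A free $\mathscr{E}_\mathfrak{p}$-summand of $M_\mathfrak{p}$ is a direct summand $F$ (with complement $G$) of $M_\mathfrak{p}$, $F \cong R_\mathfrak{p}^m$, such that each coordinate of the projection $M_\mathfrak{p} \to F \cong R_\mathfrak{p}^m$ along $G$ lies in $\mathscr{E}_\mathfrak{p}$. With $\langle S\rangle$ the submodule generated by $S$, $\delta^{\mathscr{E}}_\mathfrak{p}(S,M)$ is the largest integer $m \ge 0$ such that there is a free $\mathscr{E}_\mathfrak{p}$-summand of $M_\mathfrak{p}$ of rank $m$ contained in $\langle S\rangle_\mathfrak{p}$. A finite set $S = \{x_1,\ldots,x_n\}$ is $\mathfrak{p}$-free-basic for $M$ with respect to $\mathscr{E}$ if $\delta^{\mathscr{E}}_\mathfrak{p}(S,M) \ge \min\{n, 1+\dim_X(\mathfrak{p})\}$, and $X$-free-basic with respect to $\mathscr{E}$ if this holds for all $\mathfrak{p}\in X$. An element $x$ is $\mathfrak{p}$-free-basic with respect to $\mathscr{E}$ if $(Rx)_\mathfrak{p} \cong R_\mathfrak{p}$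 and the inclusion $(Rx)_\mathfrak{p} \subseteq M_\mathfrak{p}$ splits via an element of $\mathscr{E}_\mathfrak{p}$; $X$-free-basic if this holds for all $\mathfrak{p} \in X$. $R \oplus \mathscr{E}$ is regarded as the $R$-submodule of $\mathrm{Hom}_R(R\oplus M,R)$ consisting of maps $(r,m) \mapsto cr + f(m)$ with $c \in R$, $f \in \mathscr{E}$. *)

(* Defs.v *)
(* Localizations are encoded concretely by fractions. *)
From mathcomp Require Import all_boot all_order all_algebra.
Set Implicit Arguments. Unset Strict Implicit. Unset Printing Implicit Defensive.
Import GRing.Theory.
Local Open Scope ring_scope.

Section Defs.
Variable R : comPzRingType.

Definition is_ideal (I : R -> Prop) : Prop :=
  [/\ I 0, (forall a b, I a -> I b -> I (a + b)) & (forall r a, I a -> I (r * a))].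

Definition is_prime_ideal (p : R -> Prop) : Prop :=
  [/\ is_ideal p, ~ p 1 & (forall a b, p (a * b) -> p a \/ p b)].

Definition noetherian : Prop :=
  forall I : R -> Prop, is_ideal I ->
    exists s : seq R, forall r, I r <-> exists c : nat -> R, r = \sum_(i < size s) c i * s`_i.

Definition bigcapI (F : (R -> Prop) -> Prop) : R -> Prop :=
  fun r => forall q, F q -> q r.

Definition basic (X : (R -> Prop) -> Prop) : Prop :=
  (forall q, X q -> is_prime_ideal q) /\
  (forall F : (R -> Prop) -> Prop, (forall q, F q -> X q) ->
     is_prime_ideal (bigcapI F) -> X (bigcapI F)).

Definition chain_in (X : (R -> Prop) -> Prop) (p : R -> Prop) (l : nat) : Prop :=
  exists q : nat -> (R -> Prop),
    [/\ q 0%N = p, (forall i, (i <= l)%N -> X (q i)) &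
        (forall i, (i < l)%N ->
           (forall r, q i r -> q i.+1 r) /\ exists r, q i.+1 r /\ ~ q i r)].

(* equality of fractions a/u = b/v in R_p *)
Definition loc_eq (p : R -> Prop) (a u b v : R) : Prop :=
  exists w, ~ p w /\ w * (a * v - b * u) = 0.

Variable N : lmodType R.

Definition fin_gen : Prop :=
  exists s : seq N, forall m, exists c : nat -> R, m = \sum_(i < size s) c i *: s`_i.

Definition is_R_linear (f : N -> R) : Prop :=
  forall (r : R) (m1 m2 : N), f (r *: m1 + m2) = r * f m1 + f m2.

Definition hom_submodule (E : (N -> R) -> Prop) : Prop :=
  [/\ forall f, E f -> is_R_linear f,
      E (fun _ => 0),
      (forall f g, E f -> E g -> E (fun m => f m + g m)) &
      (forall r f, E f -> E (fun m => r * f m))].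

Definition span_of (n : nat) (x : nat -> N) (m : N) : Prop :=
  exists c : nat -> R, m = \sum_(1 <= i < n.+1) c i *: x i.

(* P_p contains a free E_p-summand of N_p of rank k: there are e_1..e_k in P_p
   (fractions e j / s j) and coordinate forms f_1..f_k in E_p (fractions f i / t i)
   with f_i(e_j) = delta_ij in R_p. *)
Definition has_free_summand (p : R -> Prop) (E : (N -> R) -> Prop)
    (P : N -> Prop) (k : nat) : Prop :=
  exists (e : 'I_k -> N) (s : 'I_k -> R) (f : 'I_k -> N -> R) (t : 'I_k -> R),
    [/\ forall j, P (e j) /\ ~ p (s j),
        forall i, E (f i) /\ ~ p (t i) &
        forall i j, loc_eq p (f i (e j)) (t i * s j) (i == j)%:R 1].

Definition delta_ge (p : R -> Prop) (E : (N -> R) -> Prop)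
    (n : nat) (x : nat -> N) (j : nat) : Prop :=
  exists k, (j <= k)%N /\ has_free_summand p E (span_of n x) k.

(* S = {x_1..x_n} is p-free-basic: delta >= min {n, 1 + dim_X p} *)
Definition pfree_basic_set (X : (R -> Prop) -> Prop) (p : R -> Prop)
    (E : (N -> R) -> Prop) (n : nat) (x : nat -> N) : Prop :=
  forall j, (j <= n)%N -> (j = 0%N \/ chain_in X p j.-1) -> delta_ge p E n x j.

Definition Xfree_basic_set (X : (R -> Prop) -> Prop)
    (E : (N -> R) -> Prop) (n : nat) (x : nat -> N) : Prop :=
  forall p, X p -> pfree_basic_set X p E n x.

(* x is p-free-basic: (Rx)_p = R_p, split by an element of E_p;
   i.e. some f/t in E_p sends x/1 to 1 *)
Definition pfree_basic_elt (p : R -> Prop) (E : (N -> R) -> Prop) (x : N) : Prop :=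
  exists f t, [/\ E f, ~ p t & loc_eq p (f x) t 1 1].

Definition Xfree_basic_elt (X : (R -> Prop) -> Prop) (E : (N -> R) -> Prop) (x : N) :=
  forall p, X p -> pfree_basic_elt p E x.

End Defs.

Definition sumE (R : comPzRingType) (M : lmodType R) (E : (M -> R) -> Prop)
  : ((R^o * M)%type -> R) -> Prop :=
  fun g => exists (c : R) (f : M -> R), E f /\ forall rm, g rm = c * rm.1 + f rm.2.

(* Main.v *)
Require Import Defs.
From mathcomp Require Import all_boot all_order all_algebra zify.
Set Implicit Arguments. Unset Strict Implicit. Unset Printing Implicit Defensive.
From Stdlib Require Import FunctionalExtensionality PropExtensionality Classical ClassicalEpsilon.
Import GRing.Theory.
Local Open Scope ring_scope.

Section Mat.
Variable R : comPzRingType.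
Variable M : lmodType R.

Definition Dm k (f : 'I_k -> M -> R) (cols : 'I_k -> M) : R :=
  \det (\matrix_(a, b) f a (cols b)).

Lemma Dm_lin k (f : 'I_k -> M -> R) cols b0 v w t :
  (forall a, is_R_linear (f a)) ->
  Dm f (fun b => if b == b0 then v + t *: w else cols b) =
  Dm f (fun b => if b == b0 then v else cols b) + t * Dm f (fun b => if b == b0 then w else cols b).
Proof.
move=> lin; rewrite /Dm -det_tr -[X in _ = X + _]det_tr -[X in _ = _ + _ * X]det_tr.
set A := (X in \det X = _). set B := (X in _ = \det X + _). set C := (X in _ = _ + _ * \det X).
rewrite (@determinant_multilinear _ _ A B C b0 1 t); first by rewrite mul1r.
- apply/rowP => a; rewrite !mxE eqxx.
  by rewrite [v + _]addrC (lin a) mul1r addrC.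
- by apply/matrixP => i j; rewrite !mxE eq_sym (negPf (neq_lift _ _)).
- by apply/matrixP => i j; rewrite !mxE eq_sym (negPf (neq_lift _ _)).
Qed.

Lemma Dm_addcol k (f : 'I_k -> M -> R) cols b1 (w : 'I_k -> R) :
  (forall a, is_R_linear (f a)) -> w b1 = 0 ->
  Dm f (fun b => cols b + w b *: cols b1) = Dm f cols.
Proof.
move=> lin wb1; rewrite /Dm.
pose U : 'M[R]_k := \matrix_(i, j) ((i == j)%:R + (i == b1)%:R * w j).
have -> : (\matrix_(a, b) f a (cols b + w b *: cols b1)) =
          (\matrix_(a, b) f a (cols b)) *m U.
  apply/matrixP => a b; rewrite !mxE.
  under eq_bigr do rewrite !mxE mulrDr.
  rewrite big_split /=.
  rewrite (bigD1 b) //= big1 ?addr0; last by move=> i /negPf ->; rewrite mulr0.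
  rewrite (bigD1 b1) //= big1 ?addr0; last by move=> i /negPf ->; rewrite mul0r mulr0.
  by rewrite !eqxx mul1r mulr1 [cols b + _]addrC (lin a) addrC mulrC.
rewrite det_mulmx.
suff -> : \det U = 1 by rewrite mulr1.
rewrite (expand_det_col _ b1) (bigD1 b1) //= big1 ?addr0; last first.
  by move=> i /negPf ni; rewrite !mxE ni mul0r addr0 mul0r.
rewrite !mxE eqxx wb1 mulr0 addr0 mul1r /cofactor addnn -signr_odd odd_double expr0 mul1r.
rewrite -[X in _ = X](@det1 R k.-1); congr (\det _).
by apply/matrixP => i j; rewrite !mxE (inj_eq (@lift_inj _ b1)) [lift b1 i == b1]eq_sym (negPf (neq_lift b1 i)) mul0r addr0.
Qed.
End Mat.

Section Prime.
Variable R : comPzRingType.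
Variable p : R -> Prop.
Hypothesis Hp : is_prime_ideal p.

Lemma p0 : p 0. Proof. by case: Hp => [[]]. Qed.
Lemma pD a b : p a -> p b -> p (a + b). Proof. by case: Hp => [[_ H _]] _ _; apply: H. Qed.
Lemma pMl r a : p a -> p (r * a). Proof. by case: Hp => [[_ _ H]] _ _; apply: H. Qed.
Lemma pMr r a : p a -> p (a * r). Proof. by rewrite mulrC; apply: pMl. Qed.
Lemma pN a : p a -> p (- a). Proof. by move=> pa; rewrite -mulN1r; apply: pMl. Qed.
Lemma pB a b : p a -> p b -> p (a - b). Proof. by move=> pa pb; apply: pD => //; apply: pN. Qed.
Lemma np1 : ~ p 1. Proof. by case: Hp. Qed.
Lemma pMP a b : p (a * b) -> p a \/ p b. Proof. by case: Hp => _ _; apply. Qed.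
Lemma npM a b : ~ p a -> ~ p b -> ~ p (a * b).
Proof. by move=> na nb /pMP [] //. Qed.
Lemma npMl a b : ~ p (a * b) -> ~ p a.
Proof. by move=> nab pa; apply: nab; apply: pMr. Qed.
Lemma npMr a b : ~ p (a * b) -> ~ p b.
Proof. by move=> nab pb; apply: nab; apply: pMl. Qed.
Lemma pX a k : ~ p a -> ~ p (a ^+ k).
Proof. by move=> na; elim: k => [|k IH]; rewrite ?expr0 ?exprS; [apply: np1 | apply: npM]. Qed.

Lemma p_sum (I : Type) (s : seq I) (P : pred I) (F : I -> R) :
  (forall i, P i -> p (F i)) -> p (\sum_(i <- s | P i) F i).
Proof.
move=> H; elim/big_ind: _ => //; [exact: p0 | exact: pD].
Qed.

Lemma np_prod (I : Type) (s : seq I) (P : pred I) (F : I -> R) :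
  (forall i, P i -> ~ p (F i)) -> ~ p (\prod_(i <- s | P i) F i).
Proof.
move=> H; elim/big_ind: _ => //; [exact: np1 | exact: npM].
Qed.

Lemma pBr a b : p (a - b) -> p b -> p a.
Proof. by move=> h pb; rewrite -(subrK b a); apply: pD. Qed.

Lemma np_sub a b : ~ p a -> p (a - b) -> ~ p b.
Proof. by move=> na h pb; apply: na; apply: pBr h pb. Qed.

End Prime.

Section Crit.
Variable R : comPzRingType.
Variable M : lmodType R.
Variable E : (M -> R) -> Prop.
Hypothesis HE : hom_submodule E.

Lemma E_ext f g : E f -> (forall m, f m = g m) -> E g.
Proof. by move=> Ef fg; have -> : g = f by apply: functional_extensionality. Qed.

Lemma E_lin f : E f -> is_R_linear f.
Proof. by case: HE => H _ _ _; apply: H. Qed.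

Lemma E_comb (I : Type) (s : seq I) (g : I -> R) (f : I -> M -> R) :
  (forall i, E (f i)) -> E (fun m => \sum_(i <- s) g i * f i m).
Proof.
case: HE => _ E0 ED EZ Ef; elim: s => [|i s IH].
  by apply: (E_ext E0) => m; rewrite big_nil.
apply: (E_ext (ED _ _ (EZ (g i) _ (Ef i)) IH)) => m.
by rewrite big_cons.
Qed.

Variable p : R -> Prop.
Hypothesis Hp : is_prime_ideal p.

Lemma critC m (y : nat -> M) k (f : 'I_k -> M -> R) cols :
  (forall a, E (f a)) -> (forall b, span_of m y (cols b)) -> ~ p (Dm f cols) ->
  delta_ge p E m y k.
Proof.
move=> Ef Sc nD; exists k; split => //.
set N := \matrix_(a, b) f a (cols b).
exists cols, (fun _ => 1), (fun i m => \sum_(b <- index_enum 'I_k) (\adj N) i b * f b m),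
  (fun _ => Dm f cols); split.
- by move=> j; split => //; apply: np1.
- by move=> i; split => //; apply: E_comb.
- move=> i j; exists 1; split; first exact: np1.
  have := congr1 (fun A : 'M[R]_k => A i j) (mul_adj_mx N); rewrite !mxE => h.
  rewrite mul1r !mulr1.
  have -> : \sum_(b <- index_enum 'I_k) \adj N i b * f b (cols j) = \det N *+ (i == j).
    by rewrite -h; apply: eq_bigr => b _; rewrite !mxE.
  by case: (i == j); rewrite /Dm -/N ?mulr1n ?mul1r ?mulr0n ?mul0r subrr.
Qed.

Lemma convD m y k :
  delta_ge p E m y k -> exists (f : 'I_k -> M -> R) cols,
    [/\ forall a, E (f a), forall b, span_of m y (cols b) & ~ p (Dm f cols)].
Proof.
case=> k' [le [e [s [f [t [Hs Ht Hl]]]]]].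
have [w Hw] := @fin_all_exists _ (fun _ => R) (fun (ij : 'I_k' * 'I_k') wij => ~ p wij /\
   wij * (f ij.1 (e ij.2) * 1 - (ij.1 == ij.2)%:R * (t ij.1 * s ij.2)) = 0)
   (fun ij => Hl ij.1 ij.2).
pose W := \prod_(ij : 'I_k' * 'I_k') w ij.
have nW : ~ p W by apply: np_prod => // ij _; case: (Hw ij).
have HW i j : W * f i (e j) = W * ((i == j)%:R * (t i * s j)).
  case: (Hw (i, j)) => _ /= h.
  move: h; rewrite mulr1 mulrBr => /eqP; rewrite subr_eq0 => /eqP h.
  by rewrite /W (bigD1 (i, j)) //= mulrAC h mulrAC.
pose wd := widen_ord le.
exists (fun a => f (wd a)), (fun b => e (wd b)); split.
- by move=> a; case: (Ht (wd a)).
- by move=> b; case: (Hs (wd b)).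
set N := \matrix_(a, b) f (wd a) (e (wd b)).
have : ~ p (\det (W *: N)).
  have -> : W *: N = diag_mx (\row_i (W * (t (wd i) * s (wd i)))).
    apply/matrixP => i j; rewrite !mxE HW.
    have -> : (wd i == wd j) = (i == j) by apply/eqP/eqP => [h|->//]; apply/val_inj; exact: (congr1 val h).
    by case: eqP => [->|_]; rewrite ?mulr1n ?mul1r ?mulr0n ?mul0r ?mulr0.
  rewrite det_diag; apply: np_prod => // i _; rewrite mxE.
  apply: (npM Hp) => //; apply: (npM Hp); [by case: (Ht (wd i)) | by case: (Hs (wd i))].
by rewrite detZ => /(npMr Hp).
Qed.


Lemma span_y m (y : nat -> M) i : (0 < i <= m)%N -> span_of m y (y i).
Proof.
move=> hi; exists (fun j => (j == i)%:R).
rewrite (bigD1_seq i) /= ?mem_index_iota ?ltnS //; last by rewrite /index_iota iota_uniq.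
rewrite eqxx scale1r big1 ?addr0 // => j /negPf ->; exact: scale0r.
Qed.

Lemma Dm_col0 k (f : 'I_k -> M -> R) cols b0 : (forall a, is_R_linear (f a)) ->
  Dm f (fun b => if b == b0 then 0 else cols b) = 0.
Proof.
move=> lin; have := @Dm_lin _ _ k f cols b0 0 0 1 lin; rewrite scale1r addr0 mul1r => h.
by apply: (@addrI _ (Dm f (fun b => if b == b0 then 0 else cols b))); rewrite addr0 -h.
Qed.

Lemma colexp m y k (f : 'I_k -> M -> R) cols :
  (forall a, is_R_linear (f a)) -> (forall b, span_of m y (cols b)) -> ~ p (Dm f cols) ->
  exists s : 'I_k -> nat, (forall b, (0 < s b <= m)%N) /\ ~ p (Dm f (fun b => y (s b))).
Proof.
move=> lin Sc nD; apply: NNPP => Hn.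
have H0 : forall s : 'I_k -> nat, (forall b, (0 < s b <= m)%N) -> p (Dm f (fun b => y (s b))).
  by move=> s hs; apply: NNPP => h; apply: Hn; exists s.
suff Q : forall t cols', (forall b : 'I_k, (t <= b)%N -> exists i, (0 < i <= m)%N /\ cols' b = y i) ->
    (forall b, span_of m y (cols' b)) -> p (Dm f cols').
  by apply: nD; apply: (Q k) => // b; rewrite leqNgt ltn_ord.
elim=> [|t IH] cols' Hy Hs.
  have [s Hsig] := @fin_all_exists _ (fun _ => nat) (fun b i => (0 < i <= m)%N /\ cols' b = y i)
     (fun b => Hy b (leq0n _)).
  have -> : cols' = fun b => y (s b) by apply: functional_extensionality => b; case: (Hsig b).
  by apply: H0 => b; case: (Hsig b).
case: (ltnP t k) => [tk | kt]; last first.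
  by apply: IH => // b hb; move: (leq_trans kt hb); rewrite leqNgt ltn_ord.
pose t' := Ordinal tk.
case: (Hs t') => c Hc.
have -> : cols' = fun b => if b == t' then \sum_(1 <= i < m.+1) c i *: y i else cols' b.
  by apply: functional_extensionality => b; case: eqP => [->|].
have : forall i, i \in index_iota 1 m.+1 -> (0 < i <= m)%N by move=> i; rewrite mem_index_iota.
elim: (index_iota 1 m.+1) => [|i s IHs] Hin.
  by rewrite big_nil Dm_col0 //; apply: p0.
rewrite big_cons [c i *: y i + _]addrC Dm_lin //; apply: (pD Hp).
  by apply: IHs => j hj; apply: Hin; rewrite inE hj orbT.
apply: (pMl Hp); apply: IH => [b hb|b].
  case: eqP => [_|nb]; first by exists i; split => //; apply: Hin; rewrite inE eqxx.
  apply: Hy; rewrite ltn_neqAle hb andbT; apply/eqP => tb; apply: nb; exact: val_inj.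
by case: eqP => _ //; apply: span_y; apply: Hin; rewrite inE eqxx.
Qed.

Lemma Dm_pert k (f : 'I_k -> M -> R) cols (d : 'I_k -> R) v :
  (forall a, is_R_linear (f a)) -> (forall b, p (d b)) -> ~ p (Dm f cols) ->
  ~ p (Dm f (fun b => cols b + d b *: v)).
Proof.
move=> lin pd.
suff Q : forall t, ~ p (Dm f cols) -> ~ p (Dm f (fun b => cols b + (if (b < t)%N then d b else 0) *: v)).
  move=> nD; have := Q k nD.
  by have -> : (fun b : 'I_k => cols b + (if (b < k)%N then d b else 0) *: v) = (fun b => cols b + d b *: v)
    by apply: functional_extensionality => b; rewrite ltn_ord.
move=> + nD; elim=> [|t IH].
  have -> : (fun b : 'I_k => cols b + (if (b < 0)%N then d b else 0) *: v) = cols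
    by apply: functional_extensionality => b; rewrite scale0r addr0.
  exact: nD.
case: (ltnP t k) => [tk | kt]; last first.
  have -> : (fun b : 'I_k => cols b + (if (b < t.+1)%N then d b else 0) *: v) =
     (fun b : 'I_k => cols b + (if (b < t)%N then d b else 0) *: v).
    apply: functional_extensionality => b.
    by rewrite (leq_trans (ltn_ord b) kt) (leq_trans (ltn_ord b) (leqW kt)).
  exact: IH.
pose t' := Ordinal tk.
pose C0 := fun b : 'I_k => cols b + (if (b < t)%N then d b else 0) *: v.
have -> : (fun b : 'I_k => cols b + (if (b < t.+1)%N then d b else 0) *: v) =
   (fun b => if b == t' then C0 t' + d t' *: v else C0 b).
  apply: functional_extensionality => b; rewrite /C0; case: eqP => [->|nb] /=.
    by rewrite ltnn ltnSn scale0r addr0.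
  rewrite ltnS leq_eqVlt; case: eqP => // tb; case: nb; exact: val_inj.
rewrite Dm_lin //.
have -> : (fun b => if b == t' then C0 t' else C0 b) = C0
  by apply: functional_extensionality => b; case: eqP => [->|].
move=> h; apply: IH; move: h; set X := (d t' * _) => h.
have hX : p X by apply: (pMr Hp).
by have := pB Hp h hX; rewrite addrK.
Qed.

End Crit.

Section Loc.
Variable R : comPzRingType.
Variable M : lmodType R.
Variable E : (M -> R) -> Prop.
Hypothesis HE : hom_submodule E.
Variable n : nat.
Variable x : nat -> M.
Variable a : R.
Variable p : R -> Prop.
Hypothesis Hp : is_prime_ideal p.

Definition cc1 (j : nat) : R := if j == 1%N then a else 1.
Definition cc (c : nat -> R) j := cc1 j * c j.
Definition xp (c : nat -> R) j := x j + cc c j *: x n.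
Definition lev c k := delta_ge p E n.-1 (xp c) k.

Lemma linE k (f : 'I_k -> M -> R) : (forall i, E (f i)) -> forall i, is_R_linear (f i).
Proof. by move=> Ef i; apply: (E_lin HE). Qed.

Lemma Dm_eqcol k (f : 'I_k -> M -> R) cols b b' : b != b' -> cols b = cols b' -> Dm f cols = 0.
Proof.
move=> nb e; rewrite /Dm -det_tr; apply: (determinant_alternate nb) => j; by rewrite !mxE e.
Qed.

Lemma inj_of k (f : 'I_k -> M -> R) (s : 'I_k -> nat) b b' :
  ~ p (Dm f (fun i => x (s i))) -> b != b' -> s b != s b'.
Proof.
move=> nD nb; apply/eqP => e; apply: nD; rewrite (Dm_eqcol f (cols := fun i => x (s i)) nb) ?e //; exact: p0.
Qed.

Lemma expand1 m (f : 'I_m.+1 -> M -> R) cols b1 :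
  ~ p (Dm f cols) -> exists a0, ~ p (Dm (fun i => f (lift a0 i)) (fun j => cols (lift b1 j))).
Proof.
move=> nD; apply: NNPP => H; apply: nD; rewrite /Dm (expand_det_col _ b1).
apply: (p_sum Hp) => a0 _; apply: (pMl Hp); rewrite /cofactor; apply: (pMl Hp).
apply: NNPP => h; apply: H; exists a0; rewrite /Dm.
move: h; congr (~ p (\det _)); by apply/matrixP => i j; rewrite !mxE.
Qed.

Lemma critX k (f : 'I_k -> M -> R) c (s : 'I_k -> nat) :
  (forall i, E (f i)) -> (forall b, (0 < s b <= n.-1)%N) ->
  ~ p (Dm f (fun b => xp c (s b))) -> lev c k.
Proof.
move=> Ef hs nD; apply: (critC HE Hp Ef _ nD) => b; exact: span_y.
Qed.

Lemma Dm_setv k (f : 'I_k -> M -> R) cols (d : 'I_k -> R) v t :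
  (forall i, is_R_linear (f i)) ->
  Dm f (fun b => if b == t then v else cols b + d b *: v) = Dm f (fun b => if b == t then v else cols b).
Proof.
move=> lin.
pose C := fun b => if b == t then v else cols b.
have := @Dm_addcol _ _ k f C t (fun b => if b == t then 0 else d b) lin; rewrite eqxx => /(_ erefl) <-.
congr (Dm f _); apply: functional_extensionality => b; rewrite /C; case: eqP => _ //.
all: by rewrite ?eqxx ?scale0r ?addr0.
Qed.

Lemma pathg k (f : 'I_k -> M -> R) cols (d : 'I_k -> R) v :
  (forall i, is_R_linear (f i)) -> ~ p (Dm f cols) ->
  ~ p (Dm f (fun b => cols b + d b *: v)) \/
  exists t, ~ p (d t) /\ ~ p (Dm f (fun b => if b == t then v else cols b)).
Proof.
move=> lin nD; apply: NNPP => H.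
have H1 : p (Dm f (fun b => cols b + d b *: v)) by apply: NNPP => h; apply: H; left.
have H2 : forall t, ~ p (d t) -> p (Dm f (fun b => if b == t then v else cols b)).
  by move=> t nt; apply: NNPP => h; apply: H; right; exists t.
suff Q : forall t, ~ p (Dm f (fun b => cols b + (if (b < t)%N then d b else 0) *: v)).
  apply: (Q k); move: H1; congr (p (Dm f _)); apply: functional_extensionality => b.
  by rewrite ltn_ord.
elim=> [|t IH].
  have -> : (fun b : 'I_k => cols b + (if (b < 0)%N then d b else 0) *: v) = cols
    by apply: functional_extensionality => b; rewrite scale0r addr0.
  exact: nD.
case: (ltnP t k) => [tk | kt]; last first.
  have -> : (fun b : 'I_k => cols b + (if (b < t.+1)%N then d b else 0) *: v) =
     (fun b : 'I_k => cols b + (if (b < t)%N then d b else 0) *: v).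
    apply: functional_extensionality => b.
    by rewrite (leq_trans (ltn_ord b) kt) (leq_trans (ltn_ord b) (leqW kt)).
  exact: IH.
pose t' := Ordinal tk.
pose C0 := fun b : 'I_k => cols b + (if (b < t)%N then d b else 0) *: v.
have -> : (fun b : 'I_k => cols b + (if (b < t.+1)%N then d b else 0) *: v) =
   (fun b => if b == t' then C0 t' + d t' *: v else C0 b).
  apply: functional_extensionality => b; rewrite /C0; case: eqP => [->|nb] /=.
    by rewrite ltnn ltnSn scale0r addr0.
  rewrite ltnS leq_eqVlt; case: eqP => // tb; case: nb; exact: val_inj.
rewrite Dm_lin //.
have -> : (fun b => if b == t' then C0 t' else C0 b) = C0
  by apply: functional_extensionality => b; case: eqP => [->|].
have -> : (fun b => if b == t' then v else C0 b) = (fun b => if b == t' then v else cols b +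
   (if (b < t)%N then d b else 0) *: v) by [].
rewrite Dm_setv //.
case: (classic (p (d t'))) => [pd | nd].
  move=> h; apply: IH; move: h; set X := (d t' * _) => h.
  have hX : p X by apply: (pMr Hp).
  by have := pB Hp h hX; rewrite addrK.
move=> h; apply: IH; move: h; set X := (d t' * _) => h.
have hX : p X by apply: (pMl Hp); apply: H2.
by have := pB Hp h hX; rewrite addrK.
Qed.

Lemma lev0 c : lev c 0.
Proof.
exists 0%N; split => //.
exists (fun _ => 0), (fun _ => 1), (fun _ _ => 0), (fun _ => 1); split; by case.
Qed.

Lemma xp_cols k (s : 'I_k -> nat) c :
  (fun b => xp c (s b)) = (fun b => x (s b) + cc c (s b) *: x n).
Proof. by []. Qed.

Lemma drop1 m (f : 'I_m.+1 -> M -> R) (s : 'I_m.+1 -> nat) b1 :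
  (forall i, E (f i)) -> (forall b, (0 < s b <= n)%N) -> s b1 = n ->
  ~ p (Dm f (fun b => x (s b))) -> forall c, lev c m.
Proof.
move=> Ef hs hb1 nD c.
have lin := linE Ef.
have hsn : forall b, b != b1 -> s b != n by move=> b nb; rewrite -hb1; apply: (inj_of nD nb).
pose cols' := fun b => if b == b1 then x n else x (s b) + cc c (s b) *: x n.
have : ~ p (Dm f cols').
  rewrite /cols' Dm_setv //; move: nD; congr (~ p (Dm f _)).
  by apply: functional_extensionality => b; case: eqP => [->|]; rewrite ?hb1.
move/(expand1 b1) => [a0 H]; apply: (@critX _ (fun i => f (lift a0 i)) c (fun j => s (lift b1 j))).
- by move=> i; apply: Ef.
- move=> j; have := hs (lift b1 j); have := hsn (lift b1 j) (ltac:(by rewrite eq_sym neq_lift)); lia.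
- move: H; congr (~ p (Dm _ _)); apply: functional_extensionality => j.
  by rewrite /cols' eq_sym (negPf (neq_lift _ _)).
Qed.

Lemma drop m (f : 'I_m.+1 -> M -> R) (s : 'I_m.+1 -> nat) :
  (forall i, E (f i)) -> (forall b, (0 < s b <= n)%N) ->
  ~ p (Dm f (fun b => x (s b))) -> forall c, lev c m.
Proof.
move=> Ef hs nD c.
case: (classic (exists b1, s b1 = n)) => [[b1 hb1] | nn].
  exact: (drop1 Ef hs hb1 nD).
have hsn : forall b, s b != n by move=> b; apply/eqP => h; apply: nn; exists b.
have lin := linE Ef.
case: (pathg (fun b => cc c (s b)) (x n) lin nD) => [H | [t [nt H]]].
  have [a0 H'] := expand1 ord0 H.
  apply: (critX (f := fun i => f (lift a0 i)) (s := fun j => s (lift ord0 j))).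
  - by move=> i; apply: Ef.
  - move=> j; have := hs (lift ord0 j); have := hsn (lift ord0 j); lia.
  - exact: H'.
apply: (drop1 (s := fun b => if b == t then n else s b) (b1 := t) Ef).
- by move=> b; have := hs t; have := hs b; case: eqP => _; lia.
- by rewrite eqxx.
- move: H; congr (~ p (Dm f _)); apply: functional_extensionality => b.
  by case: eqP.
Qed.

Lemma beta k (f : 'I_k -> M -> R) (s : 'I_k -> nat) b1 j0 :
  (forall i, E (f i)) -> (forall b, (0 < s b <= n)%N) -> s b1 = n ->
  ~ p (Dm f (fun b => x (s b))) -> (0 < j0 <= n.-1)%N -> (forall b, s b != j0) ->
  ~ p (cc1 j0) ->
  forall c bt, ~ p bt -> exists z, lev (fun i => c i + bt * z i) k.
Proof.
move=> Ef hs hb1 nD hj0 hsj ncj c bt nbt.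
have lin := linE Ef.
have hsn : forall b, b != b1 -> s b != n by move=> b nb; rewrite -hb1; apply: (inj_of nD nb).
pose tau := fun b => if b == b1 then j0 else s b.
have htau : forall b, (0 < tau b <= n.-1)%N.
  move=> b; rewrite /tau; case: eqP => [//|/eqP nb].
  by have := hs b; have := hsn b nb; lia.
case: (classic (p (Dm f (fun b => xp c (tau b))))) => [pD | nD']; last first.
  exists (fun _ => 0); have -> : (fun i => c i + bt * 0) = c
    by apply: functional_extensionality => i; rewrite mulr0 addr0.
  exact: (critX Ef htau nD').
exists (fun i => (i == j0)%:R).
set c' := fun i => c i + bt * (i == j0)%:R.
apply: (critX Ef htau).
have -> : (fun b => xp c' (tau b)) =
   (fun b => if b == b1 then xp c j0 + (cc1 j0 * bt) *: x n else xp c (tau b)).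
  apply: functional_extensionality => b; rewrite /tau; case: eqP => [_|/eqP nb].
    by rewrite /xp /cc /c' eqxx mulr1 mulrDr scalerDl addrA.
  by rewrite /xp /cc /c' (negPf (hsj b)) mulr0 addr0.
rewrite (@Dm_lin _ _ k f (fun b => xp c (tau b)) b1 (xp c j0) (x n) (cc1 j0 * bt) lin).
have -> : (fun b => if b == b1 then xp c j0 else xp c (tau b)) = (fun b => xp c (tau b))
  by apply: functional_extensionality => b; rewrite /tau; case: eqP.
have -> : (fun b => if b == b1 then x n else xp c (tau b)) =
          (fun b => if b == b1 then x n else x (tau b) + cc c (tau b) *: x n) by [].
rewrite Dm_setv //.
have -> : (fun b => if b == b1 then x n else x (tau b)) = (fun b => x (s b)).
  by apply: functional_extensionality => b; rewrite /tau; case: eqP => [->|] //; rewrite hb1.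
move=> h; apply: nD; have := pB Hp h pD; rewrite addrC addKr.
move/(pMP Hp) => [|//]; move/(pMP Hp) => [//|//].
Qed.

Lemma caseB k (f : 'I_k -> M -> R) (s : 'I_k -> nat) :
  (forall i, E (f i)) -> (forall b, (0 < s b <= n)%N /\ s b != n) ->
  ~ p (Dm f (fun b => x (s b))) ->
  forall c bt, ~ p bt -> exists z, lev (fun i => c i + bt * z i) k.
Proof.
move=> Ef hs nD c bt nbt.
have lin := linE Ef.
case: (pathg (fun b => cc c (s b)) (x n) lin nD) => [H | [t [nt H]]].
  exists (fun _ => 0); have -> : (fun i => c i + bt * 0) = c
    by apply: functional_extensionality => i; rewrite mulr0 addr0.
  apply: (critX Ef _ H) => b; case: (hs b) => h1 h2; lia.
apply: (beta (s := fun b => if b == t then n else s b) (b1 := t) (j0 := s t) Ef) => //.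
- by move=> b; case: ifP => _; [case: (hs t) | case: (hs b)] => h1 h2; lia.
- by rewrite eqxx.
- move: H; congr (~ p (Dm f _)); apply: functional_extensionality => b.
  by case: eqP.
- by case: (hs t) => h1 h2; lia.
- move=> b; case: ifP => [_|/negbT nb]; first by case: (hs t) => _ h; rewrite eq_sym.
  exact: (inj_of nD nb).
- by move: nt; rewrite /cc => /(npMl Hp).
Qed.

Lemma count_hit k (s : 'I_k -> nat) : (k < n)%N ->
  (forall j, (0 < j <= n)%N -> exists b, s b = j) -> False.
Proof.
move=> kn H.
have [g Hg] := @fin_all_exists _ (fun _ => 'I_k) (fun (i : 'I_n) b => s b = i.+1)
   (fun i => H i.+1 (ltac:(by rewrite /= ltn_ord))).
have ig : injective g.
  by move=> i i' e; apply: val_inj; have := Hg i; rewrite e Hg => -[].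
have := leq_card _ ig; rewrite !card_ord; lia.
Qed.

Lemma cramer k (f : 'I_k -> M -> R) (s : 'I_k -> nat) :
  ~ p (Dm f (fun b => x (s b))) ->
  (forall b, p (Dm f (fun b' => if b' == b then x 1%N else x (s b')))) ->
  forall a', p (f a' (x 1%N)).
Proof.
move=> nD Hb a'.
set N := \matrix_(i, j) f i (x (s j)).
pose phi := fun i => f i (x 1%N).
have H1 : forall b, \sum_i \adj N b i * phi i = Dm f (fun b' => if b' == b then x 1%N else x (s b')).
  move=> b; rewrite /Dm (expand_det_col _ b); apply: eq_bigr => i _.
  rewrite !mxE eqxx mulrC; congr (_ * _).
  rewrite /cofactor; congr (_ * \det _); apply/matrixP => r t; rewrite !mxE.
  by rewrite eq_sym (negPf (neq_lift _ _)).
have H2 : \det N * phi a' = \sum_b N a' b * (\sum_i \adj N b i * phi i).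
  under [RHS]eq_bigr do rewrite big_distrr.
  rewrite exchange_big /=.
  under eq_bigr do (under eq_bigr do rewrite mulrA; rewrite -big_distrl /=).
  have E1 : forall i, \sum_j N a' j * \adj N j i = (\det N)%:M a' i.
    by move=> i; rewrite -mul_mx_adj mxE.
  under eq_bigr do rewrite E1 mxE.
  rewrite (bigD1 a') //= eqxx mulr1n big1 ?addr0 // => i /negPf.
  by rewrite eq_sym => ->; rewrite mulr0n mul0r.
have : p (\det N * phi a').
  rewrite H2; apply: (p_sum Hp) => b _; apply: (pMl Hp); rewrite H1; exact: Hb.
by case/(pMP Hp) => //.
Qed.

Lemma square k (f : 'I_k -> M -> R) (s : 'I_k -> nat) g :
  (0 < n)%N -> (forall i, E (f i)) -> (forall b, (0 < s b <= n)%N) ->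
  ~ p (Dm f (fun b => x (s b))) -> (forall a', p (f a' (x 1%N))) ->
  E g -> ~ p (g (x 1%N)) -> forall c, lev c k.
Proof.
move=> n0 Ef hs nD hf Eg ng.
pose f2 := fun i : 'I_k.+1 => if unlift ord_max i is Some j then f j else g.
pose s2 := fun i : 'I_k.+1 => if unlift ord_max i is Some j then s j else 1%N.
apply: (drop (f := f2) (s := s2)).
- by move=> i; rewrite /f2; case: unlift.
- by move=> b; rewrite /s2; case: unlift => // j; apply: hs.
rewrite /Dm (expand_det_col _ ord_max) (bigD1 ord_max) //=.
rewrite !mxE /f2 /s2 unlift_none.
set rest := (X in _ + X).
have prest : p rest.
  apply: (p_sum Hp) => i ni; rewrite !mxE.
  case: (unliftP ord_max i) ni => [j ->|->]; last by rewrite eqxx.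
  by move=> _; rewrite unlift_none; apply: (pMr Hp); apply: hf.
move=> h; have := pB Hp h prest; rewrite addrK.
move/(pMP Hp) => [//|].
rewrite /cofactor; move/(pMP Hp) => [|].
  by apply: (pX Hp) => /(pN Hp); rewrite opprK; apply: (np1 Hp).
move=> hd; apply: nD; move: hd; rewrite /Dm; congr (p (\det _)); apply/matrixP => r t; rewrite !mxE.
by rewrite !liftK.
Qed.

Lemma loc k : (1 < n)%N -> (0 < k)%N -> (k <= n.-1)%N -> delta_ge p E n x k ->
  (~ p a \/ exists g, E g /\ ~ p (g (x 1%N))) ->
  forall c bt, ~ p bt -> exists z, lev (fun i => c i + bt * z i) k.
Proof.
move=> n1 k0 kn lS hb c bt nbt.
have [f [cols [Ef Sc nD]]] := convD Hp lS.
have [s [hs nDs]] := colexp Hp (linE Ef) Sc nD.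
have kn' : (k < n)%N by lia.
case: (classic (exists b1, s b1 = n)) => [[b1 hb1] | nn]; last first.
  apply: (caseB Ef _ nDs) => // b; split; first exact: hs.
  by apply/eqP => h; apply: nn; exists b.
case: (classic (exists j0, (0 < j0 <= n.-1)%N /\ (forall b, s b != j0) /\ ~ p (cc1 j0)))
  => [[j0 [hj0 [hsj ncj]]] | nj].
  exact: (beta Ef hs hb1 nDs hj0 hsj ncj).
have hit : forall j, (0 < j <= n.-1)%N -> ~ p (cc1 j) -> exists b, s b = j.
  move=> j hj ncj; apply: NNPP => h; apply: nj; exists j; split => //; split => // b.
  by apply/eqP => e; apply: h; exists b.
case: (classic (p a)) => [pa | na]; last first.
  exfalso; apply: (@count_hit k s kn') => j hj.
  case: (eqVneq j n) => [-> | jn]; first by exists b1.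
  apply: hit; first lia.
  by rewrite /cc1; case: ifP => _ //; apply: (np1 Hp).
have hit2 : forall j, (1 < j <= n.-1)%N -> exists b, s b = j.
  move=> j hj; apply: hit; first lia.
  have -> : cc1 j = 1 by rewrite /cc1; case: eqP => // e; lia.
  exact: (np1 Hp).
have no1 : forall b, s b != 1%N.
  move=> b; apply/eqP => e; apply: (@count_hit k s kn') => j hj.
  case: (eqVneq j n) => [-> | jn]; first by exists b1.
  case: (eqVneq j 1%N) => [-> | j1]; first by exists b.
  apply: hit2; lia.
case: (classic (exists b, ~ p (Dm f (fun b' => if b' == b then x 1%N else x (s b')))))
  => [[b nb] | allp]; last first.
  have allp' : forall b, p (Dm f (fun b' => if b' == b then x 1%N else x (s b'))).
    by move=> b; apply: NNPP => h; apply: allp; exists b.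
  have pf := cramer nDs allp'.
  case: hb => [// | [g [Eg ng]]].
  exists (fun _ => 0); apply: (square _ Ef hs nDs pf Eg ng); lia.
pose s2 := fun b' => if b' == b then 1%N else s b'.
have nD2 : ~ p (Dm f (fun b' => x (s2 b'))).
  move: nb; congr (~ p (Dm f _)); apply: functional_extensionality => b'.
  by rewrite /s2; case: ifP.
case: (eqVneq (s b) n) => [sbn | sbn].
  apply: (caseB Ef _ nD2) => // b'; rewrite /s2; case: ifP => [_ | /negbT nb'].
    by split; [lia | apply/eqP; lia].
  split; first exact: hs.
  rewrite -sbn; exact: (inj_of nDs nb').
have b1b : b1 != b by apply/eqP => e; move: sbn; rewrite -e hb1 eqxx.
apply: (beta (s := s2) (b1 := b1) (j0 := s b) Ef) => //.
- by move=> b'; rewrite /s2; case: ifP => _; [lia | exact: hs].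
- by rewrite /s2 (negPf b1b).
- by have := hs b; have := no1 b; lia.
- move=> b'; rewrite /s2; case: ifP => [_ | /negbT nb'].
    by rewrite eq_sym no1.
  exact: (inj_of nDs nb').
- rewrite /cc1 (negPf (no1 b)); exact: (np1 Hp).
Qed.

End Loc.

Section Ring.
Variable R : comPzRingType.

Definition subI (I J : R -> Prop) := forall r, I r -> J r.

Lemma pred_ext (P Q : R -> Prop) : subI P Q -> subI Q P -> P = Q.
Proof.
move=> h1 h2; apply: functional_extensionality => r.
by apply: propositional_extensionality; split; [apply: h1 | apply: h2].
Qed.

Lemma ideal_sum (I : R -> Prop) (T : Type) (s : seq T) (P : pred T) (F : T -> R) :
  is_ideal I -> (forall i, P i -> I (F i)) -> I (\sum_(i <- s | P i) F i).
Proof. by case=> I0 ID IM H; elim/big_ind: _ => //; apply: ID. Qed.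

Lemma prod_avoid (p : R -> Prop) (Qs : seq (R -> Prop)) : is_prime_ideal p ->
  (forall Q, List.In Q Qs -> exists r, Q r /\ ~ p r) ->
  exists r, (forall Q, List.In Q Qs -> is_ideal Q -> Q r) /\ ~ p r.
Proof.
move=> Hp; elim: Qs => [|Q Qs IH] H.
  by exists 1; split => //; apply: np1.
have [r1 [Qr1 nr1]] := H Q (or_introl erefl).
have [r2 [Qr2 nr2]] := IH (fun Q' h => H Q' (or_intror h)).
exists (r1 * r2); split; last exact: npM.
move=> Q' [<-|h] HQ'; first by case: HQ' => _ _ HM; rewrite mulrC; apply: HM.
by case: (HQ') => _ _ HM; apply: HM; apply: Qr2.
Qed.

Lemma pavoid (q : R -> Prop) (Qs : seq (R -> Prop)) : is_prime_ideal q ->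
  (forall Q, List.In Q Qs -> is_prime_ideal Q) ->
  (forall r, (forall Q, List.In Q Qs -> Q r) -> q r) ->
  exists Q, List.In Q Qs /\ subI Q q.
Proof.
move=> Hq HQs H; apply: NNPP => nH.
have : forall Q, List.In Q Qs -> exists r, Q r /\ ~ q r.
  move=> Q hQ; apply: NNPP => h; apply: nH; exists Q; split => // r Qr.
  by apply: NNPP => nr; apply: h; exists r.
move/(prod_avoid Hq) => [r [h1 h2]]; apply: h2; apply: H => Q hQ.
by apply: h1 => //; case: (HQs Q hQ).
Qed.

Lemma chain0 (X : (R -> Prop) -> Prop) p : X p -> chain_in X p 0.
Proof.
move=> Xp; exists (fun _ => p); split => //.
Qed.

Lemma chain_trunc (X : (R -> Prop) -> Prop) p l l' : chain_in X p l -> (l' <= l)%N -> chain_in X p l'.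
Proof.
move=> [q [q0 hX hs]] le; exists q; split => //.
- by move=> i hi; apply: hX; apply: leq_trans hi le.
- by move=> i hi; apply: hs; apply: leq_trans hi le.
Qed.

Lemma chain_ext (X : (R -> Prop) -> Prop) p q l : X q -> subI q p -> (exists r, p r /\ ~ q r) ->
  chain_in X p l -> chain_in X q l.+1.
Proof.
move=> Xq qp ex [qs [q0 hX hs]].
exists (fun i => if i is i'.+1 then qs i' else q); split => //.
- by case=> [|i] hi //; apply: hX.
- case=> [|i] hi; first by rewrite q0; split.
  by apply: hs.
Qed.

Lemma noeth_max : noetherian R -> forall F : (R -> Prop) -> Prop,
  (forall I, F I -> is_ideal I) -> (exists I, F I) ->
  exists I, F I /\ forall J, F J -> subI I J -> subI J I.
Proof.
move=> HN F HF [I0 FI0]; apply: NNPP => H.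
have nx : forall I, F I -> exists J, F J /\ subI I J /\ exists r, J r /\ ~ I r.
  move=> I FI; apply: NNPP => h; apply: H; exists I; split => // J FJ IJ r Jr.
  apply: NNPP => nr; apply: h; exists J; split => //; split => //; by exists r.
pose next := fun I => epsilon (inhabits I0)
   (fun J => F I -> F J /\ subI I J /\ exists r, J r /\ ~ I r).
have Hnext : forall I, F I -> F (next I) /\ subI I (next I) /\ exists r, next I r /\ ~ I r.
  move=> I FI; have [J HJ] := nx I FI.
  exact: (epsilon_spec (inhabits I0) (fun J => F I -> F J /\ subI I J /\ exists r, J r /\ ~ I r)
     (ex_intro _ J (fun _ => HJ)) FI).
pose ch := fun m => iter m next I0.
have Fch : forall m, F (ch m) by elim=> [|m IH] //=; case: (Hnext _ IH).
have mono : forall m m', (m <= m')%N -> subI (ch m) (ch m').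
  move=> m m' /subnK <-; elim: (m' - m)%N => [|d IH] r h; first by rewrite add0n.
  by rewrite addSn /=; case: (Hnext _ (Fch (d + m)%N)) => _ [+ _]; apply; apply: IH.
pose U := fun r => exists m, ch m r.
have IU : is_ideal U.
  split.
  - by exists 0%N; case: (HF _ FI0).
  - move=> r s [m1 h1] [m2 h2]; exists (maxn m1 m2).
    by case: (HF _ (Fch (maxn m1 m2))) => _ HD _; apply: HD;
      [apply: (mono m1) h1; apply: leq_maxl | apply: (mono m2) h2; apply: leq_maxr].
  - move=> r s [m h]; exists m; by case: (HF _ (Fch m)) => _ _ HM; apply: HM.
have [sq Hsq] := HN U IU.
have inU : forall i : 'I_(size sq), U sq`_i.
  move=> i; apply/Hsq; exists (fun j : nat => (j == i)%:R).
  rewrite (bigD1 i) //= eqxx mul1r big1 ?addr0 // => j nj; suff -> : (nat_of_ord j == nat_of_ord i) = false by rewrite mul0r.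
  exact: (negPf nj).
have [mi Hmi] := @fin_all_exists _ (fun _ => nat) (fun (i : 'I_(size sq)) m => ch m sq`_i) inU.
pose N := \max_(i < size sq) mi i.
have UN : subI U (ch N).
  move=> r /Hsq [c ->]; apply: ideal_sum; first exact: (HF _ (Fch N)).
  move=> i _; case: (HF _ (Fch N)) => _ _ HM; apply: HM.
  apply: (mono (mi i)); last exact: Hmi.
  by apply: (leq_bigmax i).
have [_ [_ [r [h1 h2]]]] := Hnext _ (Fch N).
by apply: h2; apply: UN; exists N.+1.
Qed.

Definition radf (I : R -> Prop) :=
  forall r, I r <-> (forall q, is_prime_ideal q -> subI I q -> q r).
Definition decf (I : R -> Prop) := exists Qs : seq (R -> Prop),
  (forall Q, List.In Q Qs -> is_prime_ideal Q) /\ forall r, I r <-> (forall Q, List.In Q Qs -> Q r).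

Lemma rad_dec : noetherian R -> forall I, is_ideal I -> radf I -> decf I.
Proof.
move=> HN; apply: NNPP => H.
have [I [[II [RI nDI]] Hmax]] : exists I, (is_ideal I /\ radf I /\ ~ decf I) /\
    forall J, (is_ideal J /\ radf J /\ ~ decf J) -> subI I J -> subI J I.
  apply: (noeth_max HN) => [J [] //|].
  apply: NNPP => h; apply: H => I II RI; apply: NNPP => nd; apply: h; exists I; split => //.
apply: nDI.
case: (classic (I 1)) => [I1 | nI1].
  exists [::]; split => // r; split => // _.
  by case: II => _ _ HM; rewrite -(mulr1 r); apply: HM.
case: (classic (is_prime_ideal I)) => [PI | nPI].
  exists [:: I]; split; first by move=> Q [<-|].
  by move=> r; split => [Ir Q [<-|]|h] //; apply: h; left.
have [a0 [b0 [hab [na nb]]]] : exists a0 b0, I (a0 * b0) /\ ~ I a0 /\ ~ I b0.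
  apply: NNPP => h; apply: nPI; split => // a0 b0 hab.
  apply: NNPP => hn; apply: h; exists a0, b0; split => //; split => hh; apply: hn; [left|right]; exact: hh.
pose Ia := fun u => fun r => forall q, is_prime_ideal q -> subI I q -> q u -> q r.
have IIa : forall u, is_ideal (Ia u).
  move=> u; split.
  - by move=> q [[]].
  - by move=> r s hr hs q Pq Iq qu; case: (Pq) => [[_ HD _]] _ _; apply: HD; [apply: hr | apply: hs].
  - by move=> r s hs q Pq Iq qu; case: (Pq) => [[_ _ HM]] _ _; apply: HM; apply: hs.
have RIa : forall u, radf (Ia u).
  move=> u r; split => [h q Pq sq | h q Pq Iq qu].
    apply: h => //; [move=> s Is; apply: sq => q' Pq' Iq' qu'; exact: (RI s).1 Is q' Pq' Iq' | apply: sq => q' _ _ qu'; exact: qu'].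
  apply: h => // s hs; exact: hs.
have subIa : forall u, subI I (Ia u) by move=> u r Ir q Pq Iq _; apply: (RI r).1.
have decIa : forall u, ~ I u -> decf (Ia u).
  move=> u nu; apply: NNPP => nd.
  have := Hmax (Ia u) (conj (IIa u) (conj (RIa u) nd)) (subIa u) u.
  by move=> h; apply: nu; apply: h => q _ _.
have [Qa [PQa Ha]] := decIa a0 na.
have [Qb [PQb Hb]] := decIa b0 nb.
exists (Qa ++ Qb); split.
  by move=> Q /List.in_app_iff [] h; [apply: PQa | apply: PQb].
move=> r; split.
  move=> Ir Q /List.in_app_iff [] h.
    by apply: (Ha r).1 h; apply: subIa.
  by apply: (Hb r).1 h; apply: subIa.
move=> h; apply/RI => q Pq Iq.
have : q (a0 * b0) by apply: Iq.
case: (Pq) => _ _ /(_ a0 b0) /[apply] -[qa|qb].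
  by apply: ((Ha r).2 (fun Q hQ => h Q (List.in_or_app _ _ _ (or_introl hQ)))).
by apply: ((Hb r).2 (fun Q hQ => h Q (List.in_or_app _ _ _ (or_intror hQ)))).
Qed.

Lemma in_filterP (T : Type) (P : pred T) (s : seq T) y :
  List.In y (filter P s) <-> List.In y s /\ P y.
Proof.
elim: s => [|z s IH] /=; first by split => [|[]].
case: ifP => Pz /=.
  split => [[<-|h]|[[<-|h] Py]]; [by split; [left|] | | by left | by right; apply/IH].
  by have [h1 h2] := IH.1 h; split; [right|].
split => [h|[[<-|h] Py]]; [by have [h1 h2] := IH.1 h; split; [right|] | by rewrite Pz in Py | by apply/IH].
Qed.

Lemma size_filter_lt (T : Type) (P : pred T) (s : seq T) y :
  List.In y s -> ~~ P y -> (size (filter P s) < size s)%N.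
Proof.
elim: s => [|z s IH] //= [<-|h] nP.
  by rewrite (negPf nP) ltnS size_filter count_size.
case: ifP => _ /=; rewrite ltnS ?IH //.
by rewrite size_filter count_size.
Qed.

Definition neqb (T : Type) (Q : T) := fun Q' : T =>
  if excluded_middle_informative (Q' = Q) then false else true.

Lemma neqbP (T : Type) (Q Q' : T) : neqb Q Q' <-> Q' <> Q.
Proof. by rewrite /neqb; case: excluded_middle_informative. Qed.

Lemma finite_min (X : (R -> Prop) -> Prop) : noetherian R -> basic X ->
  forall Bad : (R -> Prop) -> Prop, (forall q, Bad q -> X q) ->
  (forall Q, X Q -> ~ Bad Q -> exists r, ~ Q r /\ forall q, Bad q -> q r) ->
  exists Qs : seq (R -> Prop), (forall Q, List.In Q Qs -> is_prime_ideal Q) /\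
    forall p, Bad p -> (forall q, Bad q -> subI q p -> subI p q) -> List.In p Qs.
Proof.
move=> HN [XP Xcap] Bad BX Hopen.
have PA : forall q, Bad q -> is_prime_ideal q by move=> q /BX /XP.
pose I := bigcapI Bad.
have II : is_ideal I.
  split.
  - by move=> q /PA [[]].
  - by move=> r s hr hs q Bq; case: (PA q Bq) => [[_ HD _]] _ _; apply: HD; [apply: hr | apply: hs].
  - by move=> r s hs q Bq; case: (PA q Bq) => [[_ _ HM]] _ _; apply: HM; apply: hs.
have RI : radf I.
  move=> r; split => [h q Pq sq | h q Bq]; first exact: sq.
  by apply: h; [apply: PA | move=> s hs; apply: hs].
have [Qs0 [PQs0 HQs0]] := rad_dec HN II RI.
suff : forall N (Qs : seq (R -> Prop)), (size Qs < N)%N -> (forall Q, List.In Q Qs -> is_prime_ideal Q) ->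
  (forall r, I r <-> (forall Q, List.In Q Qs -> Q r)) ->
  exists Qs : seq (R -> Prop), (forall Q, List.In Q Qs -> is_prime_ideal Q) /\
    forall p, Bad p -> (forall q, Bad q -> subI q p -> subI p q) -> List.In p Qs.
  by move/(_ (size Qs0).+1 Qs0 (ltnSn _) PQs0 HQs0).
elim=> [|N IH] Qs // hsz PQs HQs.
case: (classic (exists Q, List.In Q Qs /\ exists r, (forall q, Bad q -> subI Q q -> q r) /\ ~ Q r))
  => [[Q [inQ [r [hr nr]]]] | nred].
  pose Qs' := filter (neqb Q) Qs.
  apply: (IH Qs').
  - have := size_filter_lt inQ (ltac:(by apply/negP => /neqbP)).
    by rewrite -/Qs' => h; apply: leq_trans h _.
  - by move=> Q' /in_filterP [h _]; apply: PQs.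
  move=> s0; split => [Is0 Q' /in_filterP [h _] | h]; first by apply: (HQs s0).1.
  apply/HQs => Q'' inQ''.
  case: (classic (Q'' = Q)) => [-> | ne]; last by apply: h; apply/in_filterP; split => //; apply/neqbP.
  have Irs : I (r * s0).
    move=> q Bq.
    have [Q1 [inQ1 Q1q]] : exists Q1, List.In Q1 Qs /\ subI Q1 q.
      apply: pavoid => //; first exact: PA.
      by move=> r' hr'; exact: ((HQs r').2 hr' q Bq).
    case: (classic (Q1 = Q)) => [e | ne1].
      by apply: (pMr (PA q Bq)); apply: hr => //; rewrite -e.
    by apply: (pMl (PA q Bq)); apply: Q1q; apply: h; apply/in_filterP; split => //; apply/neqbP.
  have := (HQs (r * s0)).1 Irs Q inQ.
  by case/(pMP (PQs Q inQ)) => // /nr.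
have nr : forall Q, List.In Q Qs -> forall r, (forall q, Bad q -> subI Q q -> q r) -> Q r.
  move=> Q inQ r hr; apply: NNPP => nr; apply: nred; exists Q; split => //; by exists r.
exists Qs; split => // p Bp minp.
have [Q [inQ Qp]] : exists Q, List.In Q Qs /\ subI Q p.
  apply: pavoid => //; first exact: PA.
  by move=> r hr; exact: ((HQs r).2 hr p Bp).
pose AQ := fun q => Bad q /\ subI Q q.
have eqQ : bigcapI AQ = Q.
  apply: pred_ext => r hr.
    by apply: (nr Q inQ) => q Bq sq; apply: hr.
  by move=> q [_ sq]; apply: sq.
have XQ : X Q.
  rewrite -eqQ; apply: Xcap; first by move=> q [Bq _]; apply: BX.
  by rewrite eqQ; apply: PQs.
have BQ : Bad Q.
  apply: NNPP => nB; have [r [nQr hr]] := Hopen Q XQ nB.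
  by apply: nQr; rewrite -eqQ => q [Bq _]; apply: hr.
have -> : p = Q by apply: pred_ext => //; apply: minp.
exact: inQ.
Qed.

Lemma min_list (L : seq (R -> Prop)) : L <> [::] ->
  exists p, List.In p L /\ forall q, List.In q L -> subI q p -> subI p q.
Proof.
elim: L => [//|q0 L IH] _.
case: (eqVneq (size L) 0%N) => [/size0nil -> | nL].
  by exists q0; split; [left | move=> q [<-|] //].
have [p' [inp' minp']] : exists p, List.In p L /\ forall q, List.In q L -> subI q p -> subI p q.
  by apply: IH => e; move: nL; rewrite e.
case: (classic (subI q0 p' /\ ~ subI p' q0)) => [[h1 h2] | h].
  exists q0; split; first by left.
  move=> q [<-|inq] // qq0.
  have := minp' q inq (fun r hr => h1 r (qq0 r hr)) => pq; exfalso; apply: h2.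
  by move=> r hr; apply: qq0; apply: pq.
exists p'; split; first by right.
move=> q [<-|inq] qp; last exact: minp' q inq qp.
by apply: NNPP => n; apply: h; split.
Qed.

Lemma avoid (L : seq (R -> Prop)) (G : (R -> Prop) -> (nat -> R) -> Prop) :
  (forall p, List.In p L -> is_prime_ideal p) ->
  (forall p, List.In p L -> forall c c', (forall i, p (c' i - c i)) -> G p c -> G p c') ->
  (forall p, List.In p L -> forall c bt, ~ p bt -> exists z, G p (fun i => c i + bt * z i)) ->
  exists c, forall p, List.In p L -> G p c.
Proof.
suff H : forall N (L : seq (R -> Prop)), (size L < N)%N ->
  (forall p, List.In p L -> is_prime_ideal p) ->
  (forall p, List.In p L -> forall c c', (forall i, p (c' i - c i)) -> G p c -> G p c') ->
  (forall p, List.In p L -> forall c bt, ~ p bt -> exists z, G p (fun i => c i + bt * z i)) ->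
  exists c, forall p, List.In p L -> G p c.
  by move=> *; apply: (H (size L).+1 L).
elim=> [|N IH] {}L hsz PL Gi Gii //.
case: (eqVneq (size L) 0%N) => [/size0nil -> | nL]; first by exists (fun _ => 0).
have [p [inp minp]] := @min_list L (ltac:(by move=> e; move: nL; rewrite e)).
pose L' := filter (neqb p) L.
have [c0 Hc0] : exists c, forall q, List.In q L' -> G q c.
  apply: IH.
  - have := size_filter_lt inp (ltac:(by apply/negP => /neqbP)).
    by rewrite -/L' => h; apply: leq_trans h _.
  - by move=> q /in_filterP [h _]; apply: PL.
  - by move=> q /in_filterP [h _]; apply: Gi.
  - by move=> q /in_filterP [h _]; apply: Gii.
have Pp := PL p inp.
have [bt [hbt nbt]] : exists r, (forall Q, List.In Q L' -> is_ideal Q -> Q r) /\ ~ p r.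
  apply: prod_avoid => // q /in_filterP [inq /neqbP nq].
  apply: NNPP => h; apply: nq; apply: pred_ext; last first.
    by apply: minp => // r hr; apply: NNPP => nr; apply: h; exists r.
  by move=> r hr; apply: NNPP => nr; apply: h; exists r.
have [z Hz] := Gii p inp c0 bt nbt.
exists (fun i => c0 i + bt * z i) => q inq.
case: (classic (q = p)) => [-> // | nq].
have inq' : List.In q L' by apply/in_filterP; split => //; apply/neqbP.
apply: (Gi q inq c0) (Hc0 q inq') => i.
rewrite [c0 i + _]addrC addrK; apply: (pMr (PL q inq)); apply: hbt => //.
by case: (PL q inq).
Qed.

End Ring.

Section Open.
Variable R : comPzRingType.
Variable M : lmodType R.
Variable E : (M -> R) -> Prop.

Lemma np_factor (q : R -> Prop) (T : finType) (F : T -> R) j :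
  is_prime_ideal q -> ~ q (\prod_i F i) -> ~ q (F j).
Proof. by move=> Hq; rewrite (bigD1 j) //=; apply: npMl. Qed.

Lemma open_good m (y : nat -> M) k Q : is_prime_ideal Q -> delta_ge Q E m y k ->
  exists r, ~ Q r /\ forall q, is_prime_ideal q -> ~ q r -> delta_ge q E m y k.
Proof.
move=> HQ [k' [le [e [s [f [t [Hs Ht Hl]]]]]]].
have [w Hw] := @fin_all_exists _ (fun _ => R) (fun (ij : 'I_k' * 'I_k') wij => ~ Q wij /\
   wij * (f ij.1 (e ij.2) * 1 - (ij.1 == ij.2)%:R * (t ij.1 * s ij.2)) = 0)
   (fun ij => Hl ij.1 ij.2).
exists ((\prod_j s j) * (\prod_i t i) * \prod_ij w ij); split.
  apply: (npM HQ); [apply: (npM HQ)|]; apply: (np_prod HQ) => i _.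
  - by case: (Hs i).
  - by case: (Ht i).
  - by case: (Hw i).
move=> q Hq nr; exists k'; split => //.
have n1 := npMl Hq nr; have n2 := npMl Hq n1; have n3 := npMr Hq n1; have n4 := npMr Hq nr.
exists e, s, f, t; split.
- by move=> j; split; [case: (Hs j) | exact: (@np_factor q _ s j Hq n2)].
- by move=> i; split; [case: (Ht i) | exact: (@np_factor q _ t i Hq n3)].
- move=> i j; exists (w (i, j)); split; first exact: (@np_factor q _ w (i, j) Hq n4).
  by case: (Hw (i, j)).
Qed.
End Open.


Section Main.
Variable R : comPzRingType.
Variable M : lmodType R.
Variable X : (R -> Prop) -> Prop.
Variable E : (M -> R) -> Prop.
Variable n : nat.
Variable x : nat -> M.
Variable a : R.
Hypothesis HN : noetherian R.
Hypothesis HB : basic X.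
Hypothesis HE : hom_submodule E.
Hypothesis hn : (1 < n)%N.
Hypothesis HS : Xfree_basic_set X E n x.
Hypothesis HEl : Xfree_basic_elt X (sumE E) ((a, x 1%N) : (R^o * M)%type).

Definition Good p c := pfree_basic_set X p E n.-1 (xp n x a c).
Definition crit p j := [/\ (0 < j <= n.-1)%N, chain_in X p j.-1, ~ chain_in X p j &
   ~ delta_ge p E n x j.+1].

Lemma XP p : X p -> is_prime_ideal p.
Proof. by case: HB => h _; apply: h. Qed.

Lemma basic_info p : X p -> ~ p a \/ exists g, E g /\ ~ p (g (x 1%N)).
Proof.
move=> Xp; have Hp := XP Xp.
have [g [t [[c0 [f0 [Ef0 hg]]] nt [w [nw hw]]]]] := HEl Xp.
have ng : ~ p (g (a, x 1%N)).
  move=> pg; apply: (npM Hp nw nt).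
  move/eqP: hw; rewrite mulrBr subr_eq0 mulr1 mul1r => /eqP <-.
  exact: (pMl Hp).
case: (classic (p a)) => [pa | na]; [right | by left].
exists f0; split => // pf; apply: ng; rewrite hg /=.
by apply: (pD Hp) => //; apply: (pMl Hp).
Qed.

Lemma autoL p j c : X p -> (j <= n.-1)%N -> delta_ge p E n x j.+1 -> lev E n x a p c j.
Proof.
move=> Xp hj hd; have Hp := XP Xp.
have [f [cols [Ef Sc nD]]] := convD Hp hd.
have [s [hs nDs]] := colexp Hp (linE HE Ef) Sc nD.
exact: (drop HE a Hp Ef hs nDs).
Qed.

Lemma good_of p c : X p -> (forall j, crit p j -> lev E n x a p c j) -> Good p c.
Proof.
move=> Xp H j hj hc.
case: (eqVneq j 0%N) => [-> | j0]; first exact: lev0.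
have ch : chain_in X p j.-1 by case: hc => // e; move: j0; rewrite e.
case: (classic (chain_in X p j)) => [cj | ncj].
  apply: autoL => //; apply: (HS Xp) => //; first lia.
  by right.
case: (classic (delta_ge p E n x j.+1)) => [dj | ndj]; first exact: autoL.
apply: H; split => //; lia.
Qed.

Lemma crit_uniq p j1 j2 : crit p j1 -> crit p j2 -> j1 = j2.
Proof.
move=> [h1 c1 n1 _] [h2 c2 n2 _].
case: (ltngtP j1 j2) => // lt.
  by exfalso; apply: n1; apply: (chain_trunc c2); lia.
by exfalso; apply: n2; apply: (chain_trunc c1); lia.
Qed.

Lemma levinv p c c' j : X p -> (forall i, p (c' i - c i)) ->
  lev E n x a p c j -> lev E n x a p c' j.
Proof.
move=> Xp hc hl; have Hp := XP Xp.
have [f [cols [Ef Sc nD]]] := convD Hp hl.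
have [s [hs nDs]] := colexp Hp (linE HE Ef) Sc nD.
apply: (critX HE Hp Ef hs).
have := Dm_pert (d := fun b => cc a c' (s b) - cc a c (s b)) (v := x n) Hp (linE HE Ef) _ nDs.
have -> : (fun b => xp n x a c (s b) + (cc a c' (s b) - cc a c (s b)) *: x n) =
   (fun b => xp n x a c' (s b)).
  apply: functional_extensionality => b.
  by rewrite /xp -addrA -scalerDl [cc a c _ + _]addrC subrK.
apply => b; rewrite /cc -mulrBr; apply: (pMl Hp); exact: hc.
Qed.

Lemma good_inv p c c' : X p -> (forall i, p (c' i - c i)) -> Good p c -> Good p c'.
Proof.
move=> Xp hc hg j hj hj'; apply: (levinv Xp hc); exact: hg.
Qed.

Lemma good_step p : X p -> forall c bt, ~ p bt -> exists z, Good p (fun i => c i + bt * z i).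
Proof.
move=> Xp c bt nbt; have Hp := XP Xp.
case: (classic (exists j, crit p j)) => [[j hj] | nc]; last first.
  exists (fun _ => 0); apply: good_of => // j hj; exfalso; apply: nc; by exists j.
have hj' := hj; case: hj' => hjn chj _ _.
have dj : delta_ge p E n x j by apply: (HS Xp) => //; [lia | right].
have [z Hz] := loc HE Hp (k := j) hn (ltac:(lia)) (ltac:(lia)) dj (basic_info Xp) c nbt.
exists z; apply: good_of => // j' hj'.
by rewrite (crit_uniq hj' hj).
Qed.

Lemma crit_list : forall N, exists L : seq (R -> Prop), (forall Q, List.In Q L -> is_prime_ideal Q) /\
  forall p j, (j < N)%N -> X p -> crit p j -> List.In p L.
Proof.
elim=> [|N [L [PL HL]]]; first by exists [::]; split.
pose Bad := fun q => X q /\ ~ delta_ge q E n x N.+1.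
have [Qs [PQs HQs]] : exists Qs : seq (R -> Prop), (forall Q, List.In Q Qs -> is_prime_ideal Q) /\
    forall p, Bad p -> (forall q, Bad q -> subI q p -> subI p q) -> List.In p Qs.
  apply: (finite_min HN HB) => [q [] // | Q XQ nB].
  have dQ : delta_ge Q E n x N.+1 by apply: NNPP => h; apply: nB.
  have [r [nr hr]] := open_good (XP XQ) dQ.
  exists r; split => // q [Xq nq]; apply: NNPP => h; apply: nq; exact: hr (XP Xq) h.
exists (L ++ Qs); split.
  by move=> Q /List.in_app_iff [] h; [apply: PL | apply: PQs].
move=> p j hj Xp hc; apply/List.in_app_iff.
case: (ltngtP j N) => [lt | gt | e]; first by left; apply: (HL p j).
  by lia.
right; move: hc; rewrite e => -[hN chN nchN ndN].
apply: HQs; first by split.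
move=> q [Xq ndq] qp r pr; apply: NNPP => nqr; apply: ndq.
apply: (HS Xq); first lia.
right; rewrite /=.
have -> : N = N.-1.+1 by lia.
apply: (chain_ext Xq qp) => //; by exists r.
Qed.

Lemma main_good : exists c, forall p, X p -> Good p c.
Proof.
have [L [PL HL]] := crit_list n.
have [c Hc] := @avoid R L (fun p c => X p -> Good p c) PL
  (fun p _ c c' hc hg Xp => good_inv Xp hc (hg Xp))
  (fun p _ c bt nbt => match classic (X p) with
     | or_introl Xp => let: ex_intro z hz := good_step Xp c nbt in ex_intro _ z (fun _ => hz)
     | or_intror nX => ex_intro _ (fun _ => 0) (fun Xp => False_ind _ (nX Xp)) end).
exists c => p Xp.
case: (classic (exists j, crit p j)) => [[j hj] | nc].
  apply: (Hc p) => //; apply: (HL p j) => //.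
  by case: hj => h _ _ _; lia.
apply: good_of => // j hj; exfalso; apply: nc; by exists j.
Qed.

End Main.

Unset Implicit Arguments.
Set Strict Implicit.

Theorem lemma4p4 (R : comPzRingType) (M : lmodType R)
  (X : (R -> Prop) -> Prop) (E : (M -> R) -> Prop)
  (n : nat) (x : nat -> M) (a : R) :
  noetherian R -> fin_gen M -> basic X -> hom_submodule E -> (2 <= n)%N ->
  Xfree_basic_set X E n x ->
  Xfree_basic_elt X (sumE E) ((a, x 1%N) : (R^o * M)%type) ->
  exists c : nat -> R,
    let x' := fun i : nat =>
      if i == 1%N then x 1%N + (a * c 1%N) *: x n else x i + c i *: x n in
    Xfree_basic_set X E n.-1 x' /\
    Xfree_basic_elt X (sumE E) ((a, x' 1%N) : (R^o * M)%type).
Proof.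
move=> HN _ HB HE hn HS HEl.
have [c Hc] := main_good HN HB HE hn HS HEl.
exists c => /=.
have -> : (fun i : nat => if i == 1%N then x 1%N + (a * c 1%N) *: x n else x i + c i *: x n)
   = xp n x a c.
  apply: functional_extensionality => i; rewrite /xp /cc /cc1.
  by case: eqP => [->|_]; rewrite ?eqxx ?mul1r.
split; first exact: Hc.
move=> p Xp; have Hp := XP HB Xp.
have [g [t [[c0 [f0 [Ef0 hg]]] nt [w [nw hw]]]]] := HEl p Xp.
have ng : ~ p (g (a, x 1%N)).
  move=> pg; apply: (npM Hp nw nt).
  move/eqP: hw; rewrite mulrBr subr_eq0 mulr1 mul1r => /eqP <-.
  exact: (pMl Hp).
case: (HE) => Elin E0 _ _.
case: (classic (p a)) => [pa | na].
  have nf : ~ p (f0 (x 1%N)).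
    by move=> pf; apply: ng; rewrite hg /=; apply: (pD Hp) => //; apply: (pMl Hp).
  exists (fun rm => 0 * rm.1 + f0 rm.2), (f0 (xp n x a c 1%N)); split.
  - by exists 0, f0.
  - rewrite /xp addrC (Elin _ Ef0) => h; apply: nf.
    have h2 : p (cc a c 1%N * f0 (x n)) by rewrite /cc /cc1 eqxx -mulrA; apply: (pMr Hp).
    by have := pB Hp h h2; rewrite addrC addKr.
  - exists 1; split; first exact: (np1 Hp).
    by rewrite /= mul0r add0r mulr1 !mul1r /xp /cc /cc1 eqxx subrr.
exists (fun rm => 1 * rm.1 + (fun _ => 0) rm.2), a; split => //.
- by exists 1, (fun _ => 0).
- exists 1; split; first exact: (np1 Hp).
  by rewrite /= !mul1r addr0 mulr1 subrr.
Qed.
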